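(* Let $\Delta_1,\Delta_2$ be simplicial complexes on $[n]$ and let $A,B,A',B'\subseteq[n]$ be nonempty sets such that $A\cap B=\emptyset$, $A'\cap B'=\emptyset$, and neither $A\cup B$ nor $A'\cup B'$ meets the vertex set of $\Delta_1\cup\Delta_2$. Then $$\tilde H_i\big((A*\Delta_1)\cup(B*\Delta_2);\mathbb{K}\big)\cong\tilde H_i\big((A'*\Delta_1)\cup(B'*\Delta_2);\mathbb{K}\big)\quad\text{for all } i>0.$$
   Context: A simplicial complex on $[n]$ is a finite family of subsets of $[n]$ closed under taking subsets (singletons need not belong to it); its vertex set is the union of its faces. For a nonempty $A\subseteq[n]$ and a simplicial complex $\Delta$ on $[n]$, the cone $A*\Delta$ is the simplicial complex whose facets are the sets $A\cup F$ with $F$ a facet of $\Delta$. $\tilde H_i(\,\cdot\,;\mathbb{K})$ denotes reduced simplicial homology with coefficients in the field $\mathbb{K}$. *)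

(* Defs.v *)
From HB Require Import structures.
From mathcomp Require Import all_boot all_order all_algebra.
Set Implicit Arguments. Unset Strict Implicit. Unset Printing Implicit Defensive.
Import GRing.Theory.
Local Open Scope ring_scope.

(* Vertex set [n] is modelled by 'I_n.  A simplicial complex is a family of
   subsets closed under taking subsets (possibly empty, possibly not containing
   all singletons). *)
Definition is_simplicial_complex (n : nat) (D : {set {set 'I_n}}) : Prop :=
  forall F G : {set 'I_n}, F \in D -> G \subset F -> G \in D.

Definition vertex_set (n : nat) (D : {set {set 'I_n}}) : {set 'I_n} :=
  \bigcup_(F in D) F.

(* cone A * D : the complex generated by the facets A :|: F (F facet of D);
   equivalently all subsets of A :|: F with F a face of D. *)
Definition cone (n : nat) (A : {set 'I_n}) (D : {set {set 'I_n}}) : {set {set 'I_n}} :=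
  [set G : {set 'I_n} | [exists F in D, G \subset A :|: F]].

(* Chains: K-valued functions on subsets of [n]; faces of dimension i are the
   faces with i+1 vertices (the empty face has dimension -1). *)
Definition chainsp (K : fieldType) (n : nat) := {ffun {set 'I_n} -> K^o}.

Definition fdelta (K : fieldType) (n : nat) (s : {set 'I_n}) : chainsp K n :=
  [ffun t => ((t == s)%:R : K)].

(* simplicial boundary with the increasing ordering of vertices:
   d[v_0 < ... < v_k] = sum_j (-1)^j [.. v_j omitted ..] *)
Definition bdry_fun (K : fieldType) (n : nat) (f : chainsp K n) : chainsp K n :=
  \sum_(s : {set 'I_n}) f s *:
     \sum_(v in s) ((-1) ^+ #|[set u in s | (u < v)%N]| : K) *: fdelta K (s :\ v).

Definition bdry (K : fieldType) (n : nat) : 'End(chainsp K n) := linfun (@bdry_fun K n).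

Definition chains (K : fieldType) (n : nat) (D : {set {set 'I_n}}) (i : nat)
  : {vspace chainsp K n} :=
  <<[seq fdelta K s | s <- enum [set s in D | #|s| == i.+1]]>>%VS.

Definition cycles (K : fieldType) (n : nat) (D : {set {set 'I_n}}) (i : nat) :=
  (chains K D i :&: lker (bdry K n))%VS.

Definition boundaries (K : fieldType) (n : nat) (D : {set {set 'I_n}}) (i : nat) :=
  (bdry K n @: chains K D i.+1)%VS.

Definition red_betti (K : fieldType) (n : nat) (D : {set {set 'I_n}}) (i : nat) : nat :=
  (\dim (cycles K D i) - \dim (boundaries K D i))%N.

(* Main.v *)
From HB Require Import structures.
Require Import Defs.
From mathcomp Require Import all_boot all_order all_algebra.
From mathcomp Require Import ring.
Set Implicit Arguments. Unset Strict Implicit. Unset Printing Implicit Defensive.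
Import GRing.Theory.
Local Open Scope ring_scope.

Section Homol.
Variables (K : fieldType) (n : nat).
Local Notation C := (chainsp K n).
Local Notation d := (@fdelta K n).

Definition lsum (G : {set 'I_n} -> C) (f : C) : C := \sum_s f s *: G s.

Lemma lsum_lin G : linear (lsum G).
Proof.
move=> k u v; rewrite /lsum scaler_sumr -big_split; apply: eq_bigr => s _ /=.
by rewrite !ffunE scalerDl scalerA.
Qed.

Lemma lsumE G f : linfun (lsum G) f = lsum G f.
Proof.
pose flM := GRing.isLinear.Build _ _ _ _ (lsum G) (lsum_lin G).
pose fL : {linear C -> C} := HB.pack (lsum G) flM.
exact: (lfunE fL f).
Qed.

Lemma fdeltaE s t : d s t = (t == s)%:R.
Proof. by rewrite ffunE. Qed.

Lemma lsum_coord G f t : lsum G f t = \sum_s f s * G s t.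
Proof. by rewrite /lsum sum_ffunE; apply: eq_bigr => s _; rewrite ffunE. Qed.

Lemma lsum_delta G t : lsum G (d t) = G t.
Proof.
rewrite /lsum (bigD1 t) //= big1 => [|s /negbTE st]; last by rewrite fdeltaE st scale0r.
by rewrite fdeltaE eqxx scale1r addr0.
Qed.

Lemma expand f : f = lsum d f.
Proof.
apply/ffunP => t; rewrite lsum_coord (bigD1 t) //= big1 => [|s /negbTE st].
  by rewrite fdeltaE eqxx mulr1 addr0.
by rewrite fdeltaE eq_sym st mulr0.
Qed.

Lemma lfun_lsum (L : 'End(C)) f : L f = lsum (fun s => L (d s)) f.
Proof.
by rewrite {1}(expand f) /lsum linear_sum; apply: eq_bigr => s _; rewrite linearZ.
Qed.

Definition sp (T : {set {set 'I_n}}) := <<[seq d s | s <- enum T]>>%VS.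

Lemma memspP (T : {set {set 'I_n}}) (f : C) : reflect (forall t, t \notin T -> f t = 0) (f \in sp T).
Proof.
apply: (iffP idP) => [fT t tT|H]; last first.
  rewrite (expand f) /lsum; apply: memv_suml => s _.
  case: (boolP (s \in T)) => sT; last by rewrite H // scale0r mem0v.
  by apply: memvZ; apply: memv_span; apply/mapP; exists s; rewrite ?mem_enum.
pose G := fun s => if s \in T then 0 else d s.
have : (sp T <= lker (linfun (lsum G)))%VS.
  apply/span_subvP => x /mapP [s]; rewrite mem_enum => sT ->.
  by rewrite memv_ker lsumE lsum_delta /G sT.
move/subvP/(_ _ fT); rewrite memv_ker lsumE => /eqP/ffunP/(_ t) H.
rewrite lsum_coord ffunE (bigD1 t) //= big1 in H => [|s st].
  by move: H; rewrite /G (negbTE tT) fdeltaE eqxx mulr1 addr0.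
by rewrite /G; case: (s \in T); rewrite ?ffunE ?mulr0 // eq_sym (negbTE st) mulr0.
Qed.

Lemma delta_sp (T : {set {set 'I_n}}) t : t \in T -> d t \in sp T.
Proof. by move=> tT; apply: memv_span; apply/mapP; exists t; rewrite ?mem_enum. Qed.

Lemma lsum_in G (T : {set {set 'I_n}}) (U : {vspace C}) (f : C) : (forall s, s \in T -> G s \in U) -> f \in sp T -> lsum G f \in U.
Proof.
move=> HG /memspP fT; apply: memv_suml => s _.
case: (boolP (s \in T)) => sT; first by apply: memvZ; apply: HG.
by rewrite fT // scale0r mem0v.
Qed.


Definition N (s : {set 'I_n}) (v : 'I_n) := #|[set u in s | (u < v)%N]|.
Definition eps (s : {set 'I_n}) (v : 'I_n) : K := (-1) ^+ N s v.
Definition Gb (s : {set 'I_n}) : C := \sum_(v in s) eps s v *: d (s :\ v).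

Lemma bdryE f : bdry K n f = lsum Gb f.
Proof. exact: (lsumE Gb f). Qed.

Lemma bdry_delta s : bdry K n (d s) = Gb s.
Proof. by rewrite bdryE lsum_delta. Qed.

Lemma N_U1 (s : {set 'I_n}) (w v : 'I_n) : N (w |: s) v = (((w \notin s) && (w < v)%N) + N s v)%N.
Proof.
rewrite /N; case hwv: (w < v)%N; last first.
  rewrite andbF add0n; apply: eq_card => u; rewrite !inE.
  by case: (eqVneq u w) => [->|_]; rewrite ?hwv ?andbF.
have ->: [set u in w |: s | (u < v)%N] = w |: [set u in s | (u < v)%N].
  by apply/setP => u; rewrite !inE; case: (eqVneq u w) => [->|_]; rewrite ?hwv.
by rewrite cardsU1 inE hwv andbT; rewrite andbT.
Qed.

Lemma N_D1 (s : {set 'I_n}) (w v : 'I_n) : w \in s -> N s v = ((w < v) + N (s :\ w) v)%N.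
Proof. by move=> ws; rewrite -{1}(setD1K ws) N_U1 setD11. Qed.

Lemma eps_U1 (s : {set 'I_n}) (w v : 'I_n) : w \notin s -> eps (w |: s) v = (-1) ^+ (w < v)%N * eps s v.
Proof. by move=> ws; rewrite /eps N_U1 ws exprD. Qed.

Lemma eps_D1 (s : {set 'I_n}) (w v : 'I_n) : w \in s -> eps (s :\ w) v = (-1) ^+ (w < v)%N * eps s v.
Proof. by move=> ws; rewrite /eps (N_D1 v ws) exprD mulrA -expr2 sqrr_sign mul1r. Qed.

Lemma eps2 s v : eps s v * eps s v = 1.
Proof. by rewrite -expr2 sqrr_sign. Qed.

Lemma ltn_neq (v w : 'I_n) : v != w -> ~~ (v < w)%N = (w < v)%N.
Proof.
move=> vw; rewrite -leqNgt leq_eqVlt; suff ->: (nat_of_ord w == v) = false by [].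
by apply/negbTE; rewrite eq_sym.
Qed.

Lemma pair_cancel (s : {set 'I_n}) (F : 'I_n -> 'I_n -> C) :
  (forall v w, v \in s -> w \in s -> v != w -> F w v = - F v w) ->
  \sum_(v in s) \sum_(w in s :\ v) F v w = 0.
Proof.
move=> HF.
have E: forall v, v \in s -> \sum_(w in s :\ v) F v w =
    \sum_(w in s | (v < w)%N) F v w + \sum_(w in s | (w < v)%N) F v w.
  move=> v vs; rewrite (bigID (fun w : 'I_n => (v < w)%N) (fun w => w \in s :\ v)) /= /=; congr (_ + _);
    apply: eq_bigl => w; rewrite !inE; case: (eqVneq w v) => [->|wv];
    rewrite ?ltnn ?andbF //=; by rewrite ltn_neq // eq_sym.
rewrite (eq_bigr _ E) big_split /=.
set X := \sum_(v in s) \sum_(w in s | (v < w)%N) F v w.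
have ->: \sum_(v in s) \sum_(w in s | (w < v)%N) F v w = - X.
  rewrite [LHS](exchange_big_dep (fun w => w \in s)) /=; last by move=> i j _ /andP [].
  rewrite /X -sumrN; apply: eq_bigr => w ws; rewrite -sumrN.
  apply: eq_big => [v|v /andP [vs /andP [_ wv]]]; first by rewrite ws.
  apply: HF => //; apply: contraTneq wv => ->; by rewrite ltnn.
by rewrite addrN.
Qed.

Lemma bdry_Gb s : bdry K n (Gb s) = 0.
Proof.
rewrite /Gb linear_sum /=.
under eq_bigr => v vs do rewrite linearZ /= bdry_delta /Gb scaler_sumr.
apply: pair_cancel => v w vs ws vw.
have ->: s :\ w :\ v = s :\ v :\ w by apply/setP => u; rewrite !inE; bool_congr.
rewrite !eps_D1 // !scalerA -scaleNr; congr (_ *: _).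
rewrite -(ltn_neq vw) signrN; ring.
Qed.

Lemma bdry2 f : bdry K n (bdry K n f) = 0.
Proof.
by rewrite (bdryE f) /lsum linear_sum big1 // => s _; rewrite linearZ /=; rewrite bdry_Gb scaler0.
Qed.

Definition Ga (a : 'I_n) (s : {set 'I_n}) : C := if a \in s then 0 else eps s a *: d (a |: s).
Definition Ha a : 'End(C) := linfun (lsum (Ga a)).

Lemma Ha_delta a s : Ha a (d s) = Ga a s.
Proof. by rewrite lsumE lsum_delta. Qed.

Lemma cone_id_delta a s : bdry K n (Ga a s) + Ha a (Gb s) = d s.
Proof.
rewrite /Ga; case: ifP => [as_|/negbT as_].
  rewrite linear0 add0r /Gb linear_sum (bigD1 a) //= big1 => [|v /andP [vs va]].
    rewrite linearZ /= Ha_delta /Ga setD11 eps_D1 // ltnn expr0 mul1r setD1K //.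
    by rewrite scalerA eps2 scale1r addr0.
  by rewrite linearZ /= Ha_delta /Ga in_setD1 eq_sym va as_ /= scaler0.
rewrite linearZ /= bdry_delta /Gb big_setU1 //= setU1K // eps_U1 // ltnn expr0 mul1r.
rewrite scalerDr scalerA eps2 scale1r -[RHS]addr0 -addrA; congr (_ + _).
rewrite scaler_sumr linear_sum -big_split big1 // => v vs /=.
have va : v != a by apply: contraNneq as_ => <-.
rewrite [Ha a _]linearZ /= Ha_delta /Ga in_setD1 (negbTE as_) andbF.
have ->: (a |: s) :\ v = a |: (s :\ v).
  apply/setP => u; rewrite !inE; case: (eqVneq u v) => [->|uv]; rewrite ?(negbTE va) //.
rewrite eps_U1 // eps_D1 // !scalerA -scalerDl.
rewrite -(ltn_neq va) signrN.
have ->: eps s a * (- (-1) ^+ (v < a)%N * eps s v) + eps s v * ((-1) ^+ (v < a)%N * eps s a) = 0 by ring.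
by rewrite scale0r.
Qed.

Lemma cone_id a f : bdry K n (Ha a f) + Ha a (bdry K n f) = f.
Proof.
have L1: bdry K n (Ha a f) = \sum_s f s *: bdry K n (Ga a s).
  rewrite (lfun_lsum (Ha a) f) /lsum linear_sum; apply: eq_bigr => s _.
  by rewrite linearZ /= Ha_delta.
have L2: Ha a (bdry K n f) = \sum_s f s *: Ha a (Gb s).
  by rewrite (bdryE f) /lsum linear_sum; apply: eq_bigr => s _; rewrite linearZ.
rewrite L1 L2 -big_split [RHS]expand /lsum; apply: eq_bigr => s _ /=.
by rewrite -scalerDr cone_id_delta.
Qed.

Definition down_closed (S : {set {set 'I_n}}) :=
  forall F G : {set 'I_n}, F \in S -> G \subset F -> G \in S.

Lemma chP (S : {set {set 'I_n}}) j (f : C) :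
  reflect (forall t, t \notin [set s in S | #|s| == j.+1] -> f t = 0) (f \in chains K S j).
Proof. exact: memspP. Qed.

Lemma delta_ch (S : {set {set 'I_n}}) j t : t \in S -> #|t| = j.+1 -> d t \in chains K S j.
Proof. by move=> tS ct; apply: delta_sp; rewrite inE tS ct eqxx. Qed.

Lemma ch_lsum G (S : {set {set 'I_n}}) j (U : {vspace C}) f :
  (forall s, s \in S -> #|s| = j.+1 -> G s \in U) -> f \in chains K S j -> lsum G f \in U.
Proof.
move=> HG fS; apply: (lsum_in (T := [set s in S | #|s| == j.+1])) => // s.
by rewrite inE => /andP [sS /eqP cs]; apply: HG.
Qed.

Lemma ch_sub (S S' : {set {set 'I_n}}) j f :
  S \subset S' -> f \in chains K S j -> f \in chains K S' j.
Proof.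
move=> /subsetP sub /chP H; apply/chP => t Ht; apply: H; apply: contra Ht.
by rewrite !inE => /andP [/sub -> ->].
Qed.

Lemma ch_cap (S1 S2 : {set {set 'I_n}}) j f :
  f \in chains K S1 j -> f \in chains K S2 j -> f \in chains K (S1 :&: S2) j.
Proof.
move=> /chP H1 /chP H2; apply/chP => t; rewrite !inE.
case: (boolP (t \in S1)) => t1 /=; last by move=> _; apply: H1; rewrite inE (negbTE t1).
by move=> Ht; apply: H2; rewrite inE.
Qed.

Lemma bdry_ch (S : {set {set 'I_n}}) j f :
  down_closed S -> f \in chains K S j.+1 -> bdry K n f \in chains K S j.
Proof.
move=> dc fS; rewrite bdryE; apply: (ch_lsum _ fS) => s sS cs.
apply: memv_suml => v vs; apply: memvZ; apply: delta_ch.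
  exact: (dc _ _ sS (subD1set s v)).
by move: cs; rewrite (cardsD1 v) vs add1n => [[->]].
Qed.

Lemma Ha_ch (S : {set {set 'I_n}}) a j f :
  (forall s, s \in S -> a |: s \in S) -> f \in chains K S j -> Ha a f \in chains K S j.+1.
Proof.
move=> HS fS; rewrite lsumE; apply: (ch_lsum _ fS) => s sS cs.
rewrite /Ga; case: ifP => [_|/negbT as_]; first exact: mem0v.
by apply: memvZ; apply: delta_ch; rewrite ?HS // cardsU1 as_ cs.
Qed.

Lemma contr a g : bdry K n g = 0 -> bdry K n (Ha a g) = g.
Proof. by move=> H; rewrite -{2}(cone_id a g) H linear0 addr0. Qed.

Definition Pr (T : {set {set 'I_n}}) : 'End(C) :=
  linfun (lsum (fun s => if s \in T then d s else 0)).

Lemma PrE (T : {set {set 'I_n}}) f t : Pr T f t = if t \in T then f t else 0.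
Proof.
rewrite lsumE lsum_coord (bigD1 t) //= big1 => [|s st].
  by case: (t \in T); rewrite ?ffunE ?eqxx ?mulr1 ?mulr0 ?addr0.
by case: (s \in T); rewrite ?ffunE ?mulr0 // eq_sym (negbTE st) mulr0.
Qed.

Lemma Pr_in (T : {set {set 'I_n}}) (S : {set {set 'I_n}}) j f :
  f \in chains K S j -> Pr T f \in chains K (T :&: S) j.
Proof.
move=> /chP H; apply/chP => t; rewrite PrE !inE; case: ifP => //= tT Ht.
by apply: H; rewrite inE.
Qed.

Lemma Pr_id (T : {set {set 'I_n}}) (S : {set {set 'I_n}}) j f :
  S \subset T -> f \in chains K S j -> Pr T f = f.
Proof.
move=> /subsetP sub /chP H; apply/ffunP => t; rewrite PrE; case: ifP => // tT.
apply/esym/H; rewrite inE; apply: contraFN tT => /andP [/sub -> _] //.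
Qed.

Lemma Pr_comp (T : {set {set 'I_n}}) (S : {set {set 'I_n}}) j f :
  f \in chains K S j -> f - Pr T f \in chains K (S :\: T) j.
Proof.
move=> /chP H; apply/chP => t; rewrite !ffunE PrE !inE.
case: ifP => tT /=; first by rewrite subrr.
by move=> Ht; rewrite H ?subr0 // inE.
Qed.

Lemma dc_U (S1 S2 : {set {set 'I_n}}) : down_closed S1 -> down_closed S2 -> down_closed (S1 :|: S2).
Proof.
move=> d1 d2 F G; rewrite !inE => /orP [] FS GF.
  by rewrite (d1 F).
by rewrite (d2 F) ?orbT.
Qed.

Lemma dc_I (S1 S2 : {set {set 'I_n}}) : down_closed S1 -> down_closed S2 -> down_closed (S1 :&: S2).
Proof.
move=> d1 d2 F G; rewrite !inE => /andP [F1 F2] GF.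
by rewrite (d1 F) // (d2 F).
Qed.

Lemma shift (X1 X2 : {set {set 'I_n}}) (a b : 'I_n) j :
  down_closed X1 -> down_closed X2 ->
  (forall s, s \in X1 -> a |: s \in X1) -> (forall s, s \in X2 -> b |: s \in X2) ->
  (forall s, s \in X1 :&: X2 -> b |: s \notin X1) ->
  red_betti K (X1 :|: X2) j.+1 = red_betti K (X1 :&: X2) j.
Proof.
move=> dc1 dc2 ha hb hbY.
set X := X1 :|: X2; set Y := X1 :&: X2.
have dcX : down_closed X by apply: dc_U.
have dcY : down_closed Y by apply: dc_I.
have hX1 : X1 \subset X by apply: subsetUl.
have hX2 : X2 \subset X by apply: subsetUr.
have hY1 : Y \subset X1 by apply: subsetIl.
have hY2 : Y \subset X2 by apply: subsetIr.
have hXX2 : X :\: X1 \subset X2.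
  by apply/subsetP => t; rewrite !inE => /andP [/negbTE -> /=].
pose P1 := Pr X1.
pose phi := (bdry K n \o P1)%VF.
have phiE f : phi f = bdry K n (P1 f) by rewrite comp_lfunE.
have spl1 k f : f \in chains K X k -> P1 f \in chains K X1 k.
  by move=> fX; apply: (ch_sub _ (Pr_in X1 fX)); apply: subsetIl.
have spl2 k f : f \in chains K X k -> f - P1 f \in chains K X2 k.
  by move=> fX; apply: (ch_sub hXX2 (Pr_comp X1 fX)).
have P1Y k f : f \in chains K X2 k -> P1 f \in chains K Y k.
  by move=> fX; apply: (Pr_in X1 fX).
have P1fix k f : f \in chains K X1 k -> P1 f = f.
  by move=> fX; apply: (Pr_id (subxx X1) fX).
have P1b k y : y \in chains K Y k -> P1 (Ha b y) = 0.
  move=> /chP yY; apply/ffunP => t; rewrite PrE ffunE; case: ifP => // tX1.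
  rewrite lsumE lsum_coord big1 // => s _.
  case: (boolP (s \in Y)) => sY; last by rewrite yY ?mul0r // inE (negbTE sY).
  rewrite /Ga; case: ifP => _; first by rewrite ffunE mulr0.
  rewrite !ffunE; case: eqP => [tE|_]; last by rewrite scaler0 mulr0.
  by move: (hbY s sY); rewrite -tE tX1.
have cycP D k z : reflect (z \in chains K D k /\ bdry K n z = 0) (z \in cycles K D k).
  by rewrite /cycles memv_cap memv_ker; apply: (iffP andP) => [[-> /eqP ->]|[-> ->]].
set Z := cycles K X j.+1; set W := cycles K Y j.
set Bd := boundaries K X j.+1; set U := boundaries K Y j.
have surj y : y \in W -> exists2 z, z \in Z & phi z = y.
  move=> /cycP [yY dy].
  have ha1 : Ha a y \in chains K X1 j.+1 by apply: Ha_ch => //; apply: ch_sub hY1 yY.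
  have hb2 : Ha b y \in chains K X2 j.+1 by apply: Ha_ch => //; apply: ch_sub hY2 yY.
  exists (Ha a y - Ha b y).
    apply/cycP; split; first by apply: memvB; [apply: ch_sub hX1 ha1 | apply: ch_sub hX2 hb2].
    by rewrite linearB /= !contr // subrr.
  by rewrite phiE linearB /= (P1b _ _ yY) subr0 (P1fix _ _ ha1) contr.
have imgZ : (phi @: Z)%VS = W.
  apply/eqP; rewrite eqEsubv; apply/andP; split; apply/subvP => x; last first.
    by move=> /surj [z zZ <-]; apply: memv_img.
  move=> /memv_imgP [z /cycP [zX dz] ->]; rewrite phiE; apply/cycP; split; last exact: bdry2.
  apply: ch_cap; first by apply: bdry_ch => //; apply: spl1.
  have ->: bdry K n (P1 z) = - bdry K n (z - P1 z) by rewrite linearB /= dz sub0r opprK.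
  by rewrite rpredN; apply: bdry_ch => //; apply: spl2.
have UW : (U <= W)%VS.
  apply/subvP => x /memv_imgP [c cY ->]; apply/cycP; split; last exact: bdry2.
  exact: bdry_ch.
set P := (Z :&: phi @^-1: U)%VS.
have imgP : (phi @: P)%VS = U.
  apply/eqP; rewrite eqEsubv; apply/andP; split; apply/subvP => x.
    by move=> /memv_imgP [p /memv_capP [_]]; rewrite -memv_preim => ? ->.
  move=> xU; have [z zZ zx] := surj x (subvP UW x xU).
  rewrite -zx; apply: memv_img; rewrite memv_cap zZ -memv_preim zx xU.
  done.
have kerEq : (P :&: lker phi)%VS = (Z :&: lker phi)%VS.
  apply/eqP; rewrite eqEsubv; apply/andP; split; apply/subvP => x; rewrite !memv_cap.
    by case/andP => /andP [-> _] ->.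
  case/andP => xZ xk; rewrite xk andbT xZ /= -memv_preim.
  by move: xk; rewrite memv_ker => /eqP ->; rewrite mem0v.
have PB : P = Bd.
  apply/eqP; rewrite eqEsubv; apply/andP; split; apply/subvP => x.
    move=> /memv_capP [xZ]; rewrite -memv_preim => /memv_imgP [w wY].
    move: xZ => /cycP [xX dx]; rewrite phiE => ew.
    set z1 := P1 x; set z2 := x - z1.
    have z11 : z1 \in chains K X1 j.+1 by apply: spl1.
    have z22 : z2 \in chains K X2 j.+1 by apply: spl2.
    have wX1 : w \in chains K X1 j.+1 by apply: ch_sub hY1 wY.
    have wX2 : w \in chains K X2 j.+1 by apply: ch_sub hY2 wY.
    have c1 : bdry K n (z1 - w) = 0 by rewrite linearB /= ew subrr.
    have c2 : bdry K n (z2 + w) = 0 by rewrite linearD /= linearB /= dx -ew sub0r addNr.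
    have -> : x = bdry K n (Ha a (z1 - w) + Ha b (z2 + w)).
      rewrite linearD /= !contr // /z2 [x - z1 + w]addrC addrA subrK addrC subrK //.
    apply: memv_img; apply: memvD.
      exact: (ch_sub hX1 (Ha_ch ha (memvB z11 wX1))).
    exact: (ch_sub hX2 (Ha_ch hb (memvD z22 wX2))).
  move=> /memv_imgP [c cX ->]; rewrite memv_cap; apply/andP; split.
    by apply/cycP; split; [apply: bdry_ch | apply: bdry2].
  rewrite -memv_preim phiE.
  set c1 := P1 c; set c2 := c - c1.
  have c11 : c1 \in chains K X1 j.+2 by apply: spl1.
  have c22 : c2 \in chains K X2 j.+2 by apply: spl2.
  have -> : bdry K n c = bdry K n c1 + bdry K n c2 by rewrite /c2 linearB /= addrC subrK.
  rewrite linearD /= (P1fix _ _ (bdry_ch dc1 c11)) linearD /= bdry2 add0r.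
  by apply: memv_img; apply: P1Y; apply: bdry_ch.
rewrite /red_betti -/Z -/W -/U -/Bd -PB.
have d1 := limg_ker_dim phi Z; have d2 := limg_ker_dim phi P.
rewrite imgZ in d1; rewrite imgP kerEq in d2.
by rewrite -d1 -d2 subnDl.

Qed.


End Homol.

Lemma cone_dc n (A : {set 'I_n}) (D : {set {set 'I_n}}) : down_closed (cone A D).
Proof.
move=> F G; rewrite !inE => /existsP [H /andP [HD sub]] GF.
by apply/existsP; exists H; rewrite HD (subset_trans GF sub).
Qed.

Lemma cone_add n (A : {set 'I_n}) (D : {set {set 'I_n}}) a s :
  a \in A -> s \in cone A D -> a |: s \in cone A D.
Proof.
move=> aA; rewrite !inE => /existsP [H /andP [HD sub]].
by apply/existsP; exists H; rewrite HD subUset sub1set inE aA sub.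
Qed.

Theorem corollary3p2 (K : fieldType) (n : nat) (D1 D2 : {set {set 'I_n}})
  (A B A' B' : {set 'I_n}) :
  is_simplicial_complex D1 -> is_simplicial_complex D2 ->
  A != set0 -> B != set0 -> A' != set0 -> B' != set0 ->
  A :&: B = set0 -> A' :&: B' = set0 ->
  [disjoint (A :|: B) & vertex_set (D1 :|: D2)] ->
  [disjoint (A' :|: B') & vertex_set (D1 :|: D2)] ->
  forall i : nat, (0 < i)%N ->
    red_betti K (cone A D1 :|: cone B D2) i = red_betti K (cone A' D1 :|: cone B' D2) i.
Proof.
move=> c1 c2 An Bn A'n B'n AB A'B' dj dj' i.
case: i => // j _.
have key : forall A0 B0 : {set 'I_n}, A0 != set0 -> B0 != set0 -> A0 :&: B0 = set0 ->
    [disjoint (A0 :|: B0) & vertex_set (D1 :|: D2)] ->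
    red_betti K (cone A0 D1 :|: cone B0 D2) j.+1 = red_betti K (D1 :&: D2) j.
  move=> A0 B0 A0n B0n AB0 dj0.
  case/set0Pn: A0n => a aA; case/set0Pn: B0n => b bB.
  have vs : forall x F, x \in A0 :|: B0 -> F \in D1 :|: D2 -> x \notin F.
    move=> x F xAB FD; apply/negP => xF.
    have : x \in vertex_set (D1 :|: D2) by apply/bigcupP; exists F.
    by rewrite (disjointFr dj0 xAB).
  have nAB : forall x, x \in A0 -> x \in B0 -> False.
    move=> x xA xB; have : x \in A0 :&: B0 by rewrite inE xA xB.
    by rewrite AB0 inE.
  have vsA : forall x F, x \in A0 -> F \in D1 :|: D2 -> x \notin F.
    by move=> x F xA; apply: vs; rewrite inE xA.
  have vsB : forall x F, x \in B0 -> F \in D1 :|: D2 -> x \notin F.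
    by move=> x F xB; apply: vs; rewrite inE xB orbT.
  have EI : cone A0 D1 :&: cone B0 D2 = D1 :&: D2.
    apply/setP => G; rewrite !inE; apply/andP/andP.
      case => /existsP [F1 /andP [F1D sub1]] /existsP [F2 /andP [F2D sub2]].
      have F1D' : F1 \in D1 :|: D2 by rewrite inE F1D.
      have F2D' : F2 \in D1 :|: D2 by rewrite inE F2D orbT.
      split.
        apply: (c1 F1) => //; apply/subsetP => x xG.
        move: (subsetP sub1 x xG) (subsetP sub2 x xG); rewrite !inE.
        case/orP => [xA|//] /orP [xB|xF2]; first by case: (nAB x xA xB).
        by move: (vsA x F2 xA F2D'); rewrite xF2.
      apply: (c2 F2) => //; apply/subsetP => x xG.
      move: (subsetP sub1 x xG) (subsetP sub2 x xG); rewrite !inE.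
      case/orP => [xA|xF1] /orP [xB|//]; first by case: (nAB x xA xB).
      by move: (vsB x F1 xB F1D'); rewrite xF1.
    case => GD1 GD2; split; apply/existsP; exists G; by rewrite ?GD1 ?GD2 subsetUr.
  rewrite -EI; apply: (@shift K n _ _ a b).
  - exact: cone_dc.
  - exact: cone_dc.
  - by move=> s; apply: cone_add.
  - by move=> s; apply: cone_add.
  move=> s _; rewrite inE; apply/negP => /existsP [F /andP [FD sub]].
  move: (subsetP sub b (setU11 b s)); rewrite inE => /orP [bA|bF].
    exact: (nAB b bA bB).
  by move: (vsB b F bB); rewrite inE FD => /(_ erefl); rewrite bF.
by rewrite (key A B) // (key A' B').
Qed.
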